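(* Let $F$ be any finite subset of $\mathbb{N}$ and $a_k$ a positive integer for each $k \in F$. Then there exist a continuous map $f : \mathbb{R}^2 \to \mathbb{R}^2$ and a fixed point $p$ of $f$ such that $\{p\}$ is an isolated invariant set and $$i(f^n,p) = 1 - \sum_{k \in F,\ k\mid n} k\,a_k \quad \text{for every } n \ge 1,$$ i.e. $\{i(f^n,p)\}_{n\ge1} = \sigma^1 - \sum_{k\in F} a_k\sigma^k$.
   Context: $i(g,p)$ is the fixed point index; $\sigma^k_n = k$ if $k\mid n$ and $0$ otherwise. $\{p\}$ is an isolated invariant set if there is a compact $N$ with $\{p\} = \mathrm{Inv}(f,N) \subset \mathrm{int}(N)$, where $\mathrm{Inv}(f,N)$ is the set of $x \in N$ admitting a sequence $(x_n)_{n\in\mathbb{Z}}\subset N$ with $x_0=x$, $f(x_n)=x_{n+1}$. *)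

(* Defs.v *)
From Stdlib Require Import Reals Lra ZArith Arith List.
Open Scope R_scope.

Definition R2 := (R * R)%type.

Definition dist2 (x y : R2) : R :=
  sqrt ((fst x - fst y) ^ 2 + (snd x - snd y) ^ 2).

Definition continuous2 (f : R2 -> R2) : Prop :=
  forall x eps, 0 < eps -> exists delta, 0 < delta /\
    forall y, dist2 x y < delta -> dist2 (f x) (f y) < eps.

Definition bounded2 (N : R2 -> Prop) : Prop :=
  exists M, forall x, N x -> dist2 x (0, 0) <= M.

Definition closed2 (N : R2 -> Prop) : Prop :=
  forall x, (forall eps, 0 < eps -> exists y, N y /\ dist2 x y < eps) -> N x.

(* Heine-Borel: compact subsets of R^2 are the closed bounded ones *)
Definition compact2 (N : R2 -> Prop) : Prop := bounded2 N /\ closed2 N.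

Definition interior2 (N : R2 -> Prop) (x : R2) : Prop :=
  exists eps, 0 < eps /\ forall y, dist2 x y < eps -> N y.

Definition Inv (f : R2 -> R2) (N : R2 -> Prop) (x : R2) : Prop :=
  exists xs : Z -> R2, xs 0%Z = x /\
    forall n : Z, N (xs n) /\ f (xs n) = xs (n + 1)%Z.

Definition isolated_invariant_singleton (f : R2 -> R2) (p : R2) : Prop :=
  exists N : R2 -> Prop, compact2 N /\
    (forall x, Inv f N x <-> x = p) /\ interior2 N p.

Definition winds (gamma : R -> R2) (m : Z) : Prop :=
  (forall t, 0 <= t <= 1 -> gamma t <> (0, 0)) /\
  exists theta : R -> R,
    (forall t, continuity_pt theta t) /\
    (forall t, 0 <= t <= 1 ->
       gamma t = (dist2 (gamma t) (0,0) * cos (theta t),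
                  dist2 (gamma t) (0,0) * sin (theta t))) /\
    theta 1 - theta 0 = 2 * PI * IZR m.

Definition circ (p : R2) (r t : R) : R2 :=
  (fst p + r * cos (2 * PI * t), snd p + r * sin (2 * PI * t)).

Definition fp_index (g : R2 -> R2) (p : R2) (m : Z) : Prop :=
  g p = p /\
  exists r0, 0 < r0 /\ forall r, 0 < r < r0 ->
    (forall x, dist2 x p <= r -> g x = x -> x = p) /\
    winds (fun t => let x := circ p r t in
                    (fst x - fst (g x), snd x - snd (g x))) m.

(* sum_{k in F, k | n} k * a_k  (F given as a duplicate-free list) *)
Definition divsum (F : list nat) (a : nat -> nat) (n : nat) : Z :=
  fold_right (fun k acc =>
    ((if Nat.eqb k 0 then 0 else if Nat.eqb (Nat.modulo n k) 0
      then Z.of_nat (k * a k) else 0) + acc)%Z) 0%Z F.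

(* Main.v *)
Require Import Defs.
From Stdlib Require Import Reals ZArith Arith List.
From Stdlib Require Import Lra Lia Classical FunctionalExtensionality Ring_theory.
Open Scope R_scope.

Open Scope R_scope.

Definition c0 : R2 := (0,0).
Definition c1 : R2 := (1,0).
Definition cadd (z w : R2) : R2 := (fst z + fst w, snd z + snd w).
Definition cneg (z : R2) : R2 := (- fst z, - snd z).
Definition csub (z w : R2) : R2 := cadd z (cneg w).
Definition cm (z w : R2) : R2 :=
  (fst z * fst w - snd z * snd w, fst z * snd w + snd z * fst w).
Definition expi (x : R) : R2 := (cos x, sin x).
Definition nrm (z : R2) : R := sqrt (fst z ^ 2 + snd z ^ 2).

Lemma peq (a b c d : R) : a = c -> b = d -> @eq R2 (a,b) (c,d).
Proof. intros -> ->; auto. Qed.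
Lemma R2_ring : ring_theory c0 c1 cadd cm csub cneg (@eq R2).
Proof.
  constructor; intros; unfold c0, c1, cadd, cm, csub, cneg;
  try destruct x; try destruct y; try destruct z; simpl; unfold cadd; simpl; apply peq; ring.
Qed.
Add Ring R2r : R2_ring.

Lemma nrm_ge0 z : 0 <= nrm z.
Proof. apply sqrt_pos. Qed.
Lemma nrm_sq z : nrm z ^ 2 = fst z ^ 2 + snd z ^ 2.
Proof. unfold nrm. rewrite pow2_sqrt; [auto| nra]. Qed.
Lemma dist0 z : dist2 z (0,0) = nrm z.
Proof. unfold dist2, nrm; simpl. f_equal; ring. Qed.
Lemma nrm_pos z : z <> (0,0) -> 0 < nrm z.
Proof.
  intros H. destruct (nrm_ge0 z) as [|E]; auto. exfalso. apply H.
  pose proof (nrm_sq z) as S. rewrite <- E in S. destruct z as [x y]; simpl in *.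
  assert (x = 0) by nra. assert (y = 0) by nra. subst; auto.
Qed.
Lemma nrm_eq (z : R2) r : 0 <= r -> fst z ^ 2 + snd z ^ 2 = r ^ 2 -> nrm z = r.
Proof. intros Hr E. unfold nrm. rewrite E. apply sqrt_pow2; auto. Qed.
Lemma nrm_cm z w : nrm (cm z w) = nrm z * nrm w.
Proof.
  apply nrm_eq. apply Rmult_le_pos; apply nrm_ge0.
  rewrite Rpow_mult_distr, !nrm_sq. destruct z, w; simpl; ring.
Qed.
Lemma nrm_expi x : nrm (expi x) = 1.
Proof. apply nrm_eq. lra. simpl. pose proof (sin2_cos2 x). unfold Rsqr in *. nra. Qed.

Lemma winds_ext g h m : (forall t, 0 <= t <= 1 -> g t = h t) -> winds g m -> winds h m.
Proof.
  intros E [Hnz [th [Hc [Hr Hd]]]]. split.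
  - intros t Ht. rewrite <- E; auto.
  - exists th. repeat split; auto. intros t Ht. rewrite <- E; auto.
Qed.

Lemma winds_eqm g m m' : m = m' -> winds g m -> winds g m'.
Proof. intros ->; auto. Qed.

Lemma cm_polar a b r1 r2 t1 t2 :
  fst a = r1 * cos t1 -> snd a = r1 * sin t1 ->
  fst b = r2 * cos t2 -> snd b = r2 * sin t2 ->
  cm a b = (r1 * r2 * cos (t1 + t2), r1 * r2 * sin (t1 + t2)).
Proof.
  destruct a, b; simpl; intros -> -> -> ->. rewrite cos_plus, sin_plus.
  unfold cm; simpl; f_equal; ring.
Qed.

Lemma winds_mul g h m1 m2 : winds g m1 -> winds h m2 ->
  winds (fun t => cm (g t) (h t)) (m1 + m2).
Proof.
  intros [Hnz1 [th1 [Hc1 [Hr1 Hd1]]]] [Hnz2 [th2 [Hc2 [Hr2 Hd2]]]]. split.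
  - intros t Ht E. pose proof (nrm_pos _ (Hnz1 t Ht)). pose proof (nrm_pos _ (Hnz2 t Ht)).
    assert (nrm (cm (g t) (h t)) = 0) by (rewrite E; apply nrm_eq; simpl; lra).
    rewrite nrm_cm in H1. nra.
  - exists (fun t => th1 t + th2 t). repeat split.
    + intros t. apply continuity_pt_plus; auto.
    + intros t Ht. rewrite dist0, nrm_cm, <- !dist0.
      apply cm_polar.
      * rewrite (Hr1 t Ht) at 1; auto.
      * rewrite (Hr1 t Ht) at 1; auto.
      * rewrite (Hr2 t Ht) at 1; auto.
      * rewrite (Hr2 t Ht) at 1; auto.
    + rewrite plus_IZR. lra.
Qed.

Lemma winds_const (c : R) : 0 < c -> winds (fun _ => (c, 0)) 0.
Proof.
  intros Hc. split.
  - intros t _ E. injection E. lra.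
  - exists (fun _ => 0). repeat split.
    + intros t. apply continuity_pt_const. intros x y; auto.
    + intros t _. rewrite dist0. rewrite (nrm_eq (c,0) c) by (simpl; lra).
      rewrite cos_0, sin_0. f_equal; ring.
    + simpl. ring.
Qed.

Lemma winds_neg1 : winds (fun _ => (-1, 0)) 0.
Proof.
  split.
  - intros t _ E. injection E. lra.
  - exists (fun _ => PI). repeat split.
    + intros t. apply continuity_pt_const. intros x y; auto.
    + intros t _. rewrite dist0. rewrite (nrm_eq (-1,0) 1) by (simpl; lra).
      rewrite cos_PI, sin_PI. f_equal; ring.
    + simpl. ring.
Qed.

Lemma cont_id t : continuity_pt (fun x => x) t.
Proof. apply derivable_continuous_pt, derivable_pt_id. Qed.

Lemma winds_expi a (m : Z) : winds (fun t => expi (a + 2 * PI * IZR m * t)) m.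
Proof.
  split.
  - intros t _ E. injection E. intros. pose proof (sin2_cos2 (a + 2 * PI * IZR m * t)).
    rewrite H, H0 in H1. unfold Rsqr in H1. lra.
  - exists (fun t => a + 2 * PI * IZR m * t). repeat split.
    + intros t. apply continuity_pt_plus. apply continuity_pt_const; intros x y; auto.
      apply continuity_pt_mult. apply continuity_pt_const; intros x y; auto. apply cont_id.
    + intros t _. rewrite dist0, nrm_expi. unfold expi. f_equal; ring.
    + ring.
Qed.

Open Scope R_scope.

Definition Cont (f : R -> R) := forall t, continuity_pt f t.
Lemma Cc c : Cont (fun _ => c).
Proof. intros t. apply continuity_pt_const. intros x y; auto. Qed.
Lemma Cid : Cont (fun x => x).
Proof. intros t; apply cont_id. Qed.
Lemma Cplus f g : Cont f -> Cont g -> Cont (fun t => f t + g t).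
Proof. intros Hf Hg t. exact (continuity_pt_plus f g t (Hf t) (Hg t)). Qed.
Lemma Cminus f g : Cont f -> Cont g -> Cont (fun t => f t - g t).
Proof. intros Hf Hg t. exact (continuity_pt_minus f g t (Hf t) (Hg t)). Qed.
Lemma Cmult f g : Cont f -> Cont g -> Cont (fun t => f t * g t).
Proof. intros Hf Hg t. exact (continuity_pt_mult f g t (Hf t) (Hg t)). Qed.
Lemma Copp f : Cont f -> Cont (fun t => - f t).
Proof. intros Hf t. exact (continuity_pt_opp f t (Hf t)). Qed.
Lemma Ccos f : Cont f -> Cont (fun t => cos (f t)).
Proof. intros Hf t. exact (continuity_pt_comp f cos t (Hf t) (continuity_cos _)). Qed.
Lemma Csin f : Cont f -> Cont (fun t => sin (f t)).
Proof. intros Hf t. exact (continuity_pt_comp f sin t (Hf t) (continuity_sin _)). Qed.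
Lemma Cabs f : Cont f -> Cont (fun t => Rabs (f t)).
Proof. intros Hf t. exact (continuity_pt_comp f Rabs t (Hf t) (Rcontinuity_abs _)). Qed.
Lemma Cpow f n : Cont f -> Cont (fun t => f t ^ n).
Proof. intros Hf t. exact (continuity_pt_comp f (fun x => x ^ n) t (Hf t)
   (derivable_continuous_pt _ _ (derivable_pt_pow n _))). Qed.
Lemma Csqrt f : Cont f -> (forall t, 0 <= f t) -> Cont (fun t => sqrt (f t)).
Proof. intros Hf Hp t. exact (continuity_pt_comp f sqrt t (Hf t) (continuity_pt_sqrt _ (Hp t))). Qed.
Lemma Cdiv f g : Cont f -> Cont g -> (forall t, g t <> 0) -> Cont (fun t => f t / g t).
Proof. intros Hf Hg Hp t. exact (continuity_pt_div f g t (Hf t) (Hg t) (Hp t)). Qed.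
Lemma Catan f : Cont f -> Cont (fun t => atan (f t)).
Proof. intros Hf t. exact (continuity_pt_comp f atan t (Hf t)
   (derivable_continuous_pt _ _ (derivable_pt_atan _))). Qed.

Ltac cont := repeat first [ apply Cc | apply Cid | apply Cplus | apply Cminus | apply Cmult
  | apply Copp | apply Ccos | apply Csin | apply Cabs | apply Cpow ].

Lemma half_angle x y : 0 < sqrt (x^2+y^2) + x ->
  let r := sqrt (x^2+y^2) in let a := 2 * atan (y / (r + x)) in
  x = r * cos a /\ y = r * sin a.
Proof.
  intros Hp r a. fold r in Hp.
  assert (Hr2 : r ^ 2 = x^2+y^2) by (unfold r; rewrite pow2_sqrt; nra).
  assert (Hr0 : 0 <= r) by apply sqrt_pos.
  set (h := y / (r + x)).
  pose proof (atan_bound h) as [B1 B2].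
  assert (Hc : 0 < cos (atan h)) by (apply cos_gt_0; lra).
  assert (Ht : sin (atan h) = h * cos (atan h)).
  { assert (T : sin (atan h) = tan (atan h) * cos (atan h)) by (unfold tan; field; lra).
    rewrite tan_atan in T. exact T. }
  assert (Hs : sin (atan h) ^ 2 + cos (atan h) ^ 2 = 1).
  { pose proof (sin2_cos2 (atan h)). unfold Rsqr in H. lra. }
  assert (Hcc : cos (atan h) ^ 2 * (1 + h^2) = 1) by (rewrite Ht in Hs; nra).
  assert (Hrp : 0 < r).
  { destruct Hr0 as [|E]; auto. exfalso. rewrite <- E in Hr2, Hp. nra. }
  unfold a. fold h. rewrite cos_2a, sin_2a, Ht.
  assert (Hh : h * (r + x) = y) by (unfold h; field; lra).
  assert (E1 : cos (atan h) ^ 2 * ((r+x)^2 + y^2) = (r+x)^2).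
  { rewrite <- Hh. replace ((r + x) ^ 2 + (h * (r + x)) ^ 2) with ((r+x)^2 * (1 + h^2)) by ring.
    rewrite <- Rmult_assoc, (Rmult_comm _ ((r+x)^2)), Rmult_assoc, Hcc. ring. }
  assert (E2 : (r+x)^2 + y^2 = 2 * r * (r + x)) by nra.
  rewrite E2 in E1.
  assert (E3 : cos (atan h) ^ 2 * 2 * r = r + x).
  { apply (Rmult_eq_reg_r (r+x)); [|lra]. nra. }
  split.
  - replace (r * (cos (atan h) * cos (atan h) - h * cos (atan h) * (h * cos (atan h))))
      with ((cos (atan h) ^2 * 2 * r) / 2 * (1 - h * h)) by field.
    rewrite E3. unfold h.
    replace (y / (r + x) * (y / (r + x))) with (y^2 / (r+x)^2) by (field; lra).
    replace (y^2) with (r^2 - x^2) by lra. field. lra.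
  - replace (r * (2 * (h * cos (atan h)) * cos (atan h))) with (cos (atan h)^2 * 2 * r * h) by ring.
    rewrite E3. unfold h. field. lra.
Qed.

Lemma slit_pos x y : ~ (y = 0 /\ x <= 0) -> 0 < sqrt (x^2+y^2) + x.
Proof.
  intros H. destruct (Req_dec y 0) as [->|Hy].
  - assert (0 < x) by (destruct (Rle_dec x 0); [exfalso; auto| lra]).
    pose proof (sqrt_pos (x^2+0^2)). lra.
  - assert (Rabs x < sqrt (x^2+y^2)).
    { rewrite <- sqrt_Rsqr_abs. apply sqrt_lt_1_alt. split. apply Rle_0_sqr.
      unfold Rsqr. assert (0 < y*y) by (apply Rsqr_pos_lt; auto). nra. }
    pose proof (Rle_abs (-x)). rewrite Rabs_Ropp in H1. lra.
Qed.

Lemma winds_slit g : Cont (fun t => fst (g t)) -> Cont (fun t => snd (g t)) ->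
  (forall t, ~ (snd (g t) = 0 /\ fst (g t) <= 0)) -> g 0 = g 1 -> winds g 0.
Proof.
  intros Hx Hy Hs Hp. split.
  - intros t _ E. apply (Hs t). rewrite E; simpl; lra.
  - exists (fun t => 2 * atan (snd (g t) / (sqrt (fst (g t) ^ 2 + snd (g t) ^ 2) + fst (g t)))).
    repeat split.
    + apply Cmult. apply Cc. apply Catan. apply Cdiv. auto.
      apply Cplus; auto. apply Csqrt. apply Cplus; apply Cpow; auto.
      intros t; nra.
      intros t. pose proof (slit_pos _ _ (Hs t)). lra.
    + intros t _. rewrite dist0. unfold nrm.
      destruct (half_angle (fst (g t)) (snd (g t)) (slit_pos _ _ (Hs t))) as [E1 E2].
      destruct (g t) as [a b]. simpl in *. apply peq; auto.
    + rewrite Hp. simpl. ring.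
Qed.

Lemma winds_slitpos g : Cont (fun t => fst (g t)) -> Cont (fun t => snd (g t)) ->
  (forall t, ~ (snd (g t) = 0 /\ 0 <= fst (g t))) -> g 0 = g 1 -> winds g 0.
Proof.
  intros Hx Hy Hs Hp.
  assert (W := winds_mul _ _ _ _ winds_neg1
     (winds_slit (fun t => cneg (g t)) (Copp _ Hx) (Copp _ Hy) ltac:(
        intros t [H1 H2]; apply (Hs t); simpl in *; split; lra) ltac:(cbv beta; rewrite Hp; reflexivity))).
  simpl in W. eapply winds_ext; [|exact W]. intros t _. unfold cm, cneg; simpl.
  destruct (g t); simpl; apply peq; ring.
Qed.

Open Scope R_scope.

Definition pos (x : R) := (x + Rabs x) / 2.
Lemma pos_ge0 x : 0 <= pos x.
Proof. unfold pos. pose proof (Rle_abs (-x)). rewrite Rabs_Ropp in H. lra. Qed.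
Lemma pos_id x : 0 <= x -> pos x = x.
Proof. intros. unfold pos. rewrite Rabs_pos_eq; lra. Qed.
Lemma pos_0 x : x <= 0 -> pos x = 0.
Proof. intros. unfold pos. rewrite Rabs_left1; lra. Qed.
Lemma pos_gt x : 0 < pos x -> 0 < x.
Proof. intros. destruct (Rle_dec x 0). rewrite pos_0 in H; lra. lra. Qed.
Lemma pos_scale r x : 0 <= r -> pos (r * x) = r * pos x.
Proof. intros. unfold pos. rewrite Rabs_mult, (Rabs_pos_eq r); auto. field. Qed.
Lemma Cpos f : Cont f -> Cont (fun t => pos (f t)).
Proof. intros. unfold pos. apply Cmult; [|apply Cc]. apply Cplus; auto. apply Cabs; auto. Qed.

Lemma cos_le_dec a x : 0 <= a -> a <= x -> x <= PI -> cos x <= cos a.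
Proof.
  intros. destruct (Req_dec a x) as [->|]. lra.
  left. apply cos_decreasing_1; lra.
Qed.

Lemma cos_2PI_minus x : cos (2 * PI - x) = cos x.
Proof. rewrite cos_minus, cos_2PI, sin_2PI. ring. Qed.

Lemma cos_le_sep a x : 0 <= a -> a <= PI -> a <= x -> x <= 2 * PI - a -> cos x <= cos a.
Proof.
  intros. destruct (Rle_dec x PI).
  - apply cos_le_dec; lra.
  - rewrite <- cos_2PI_minus. apply cos_le_dec; lra.
Qed.

Section Map.
Variable L : list nat.
Definition M := list_sum L.
Definition NN := INR M + 2.
Definition beta (j : nat) := 2 * PI * (INR j + 1) / NN.
Definition mu := cos (2 * PI / NN).
Definition al := 1 - (1 - mu) / 4.

Lemma NN_ge2 : 2 <= NN.
Proof. unfold NN. pose proof (pos_INR M). lra. Qed.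

Lemma mu_bounds : -1 <= mu < 1.
Proof.
  pose proof NN_ge2. pose proof PI_RGT_0. unfold mu. split. apply COS_bound.
  assert (0 < 2 * PI / NN <= PI).
  { split. apply Rdiv_lt_0_compat; lra. apply Rmult_le_reg_r with NN. lra.
    unfold Rdiv. rewrite Rmult_assoc, Rinv_l by lra. nra. }
  rewrite <- cos_0. apply cos_decreasing_1; lra.
Qed.

Lemma al_facts : 1/2 <= al < 1 /\ mu <= 2 * al ^ 2 - 1 /\ mu <= al.
Proof. pose proof mu_bounds. unfold al. repeat split; nra. Qed.

Lemma sep i j : (i < M)%nat -> (j < M)%nat -> i <> j -> cos (beta i - beta j) <= mu.
Proof.
  intros Hi Hj Hij. pose proof NN_ge2. pose proof PI_RGT_0.
  assert (forall i j, (i < M)%nat -> (j < M)%nat -> (j < i)%nat -> cos (beta i - beta j) <= mu).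
  { clear i j Hi Hj Hij. intros i j Hi Hj Hij. unfold mu.
    replace (beta i - beta j) with (2 * PI * (INR i - INR j) / NN) by (unfold beta; field; lra).
    assert (1 <= INR i - INR j) by (rewrite <- minus_INR by lia; apply (le_INR 1); lia).
    assert (INR i - INR j <= NN - 1).
    { unfold NN. assert (INR i <= INR M) by (apply le_INR; lia). pose proof (pos_INR j). lra. }
    apply cos_le_sep.
    - apply Rlt_le, Rdiv_lt_0_compat; lra.
    - apply Rmult_le_reg_r with NN. lra. unfold Rdiv. rewrite Rmult_assoc, Rinv_l by lra. nra.
    - unfold Rdiv. apply Rmult_le_compat_r. left; apply Rinv_0_lt_compat; lra. nra.
    - apply Rmult_le_reg_r with NN. lra.
      unfold Rdiv. rewrite Rmult_minus_distr_r, !Rmult_assoc, Rinv_l by lra. nra. }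
  destruct (lt_dec j i) as [Hlt|Hlt]; auto.
  rewrite <- cos_neg. replace (- (beta i - beta j)) with (beta j - beta i) by ring.
  apply H1; auto; lia.
Qed.

Definition cc (j : nat) (z : R2) : R :=
  pos ((fst z * cos (beta j) + snd z * sin (beta j) - al * nrm z) / (1 - al)).

Lemma cc_ge0 j z : 0 <= cc j z.
Proof. apply pos_ge0. Qed.

Lemma cc_pos j z : 0 < cc j z -> al * nrm z < fst z * cos (beta j) + snd z * sin (beta j).
Proof.
  intros H. apply pos_gt in H. pose proof al_facts.
  apply Rmult_lt_compat_r with (r := 1 - al) in H; [|lra].
  unfold Rdiv in H. rewrite Rmult_0_l, Rmult_assoc, Rinv_l, Rmult_1_r in H; lra.
Qed.

Lemma W1 i j z : (i < M)%nat -> (j < M)%nat -> i <> j -> 0 < cc i z -> 0 < cc j z -> False.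
Proof.
  intros Hi Hj Hij Ci Cj. apply cc_pos in Ci, Cj.
  pose proof (sep i j Hi Hj Hij) as S. pose proof al_facts as [[A1 A2] [A3 A4]].
  pose proof (nrm_sq z) as N. pose proof (nrm_ge0 z) as N0.
  rewrite cos_minus in S.
  pose proof (sin2_cos2 (beta i)). pose proof (sin2_cos2 (beta j)). unfold Rsqr in *.
  destruct z as [x y]; cbn [fst snd] in *.
  set (u1 := cos (beta i) + cos (beta j)) in *. set (u2 := sin (beta i) + sin (beta j)) in *.
  assert (U : u1 ^ 2 + u2 ^ 2 <= 4 * al ^ 2) by (unfold u1, u2; nra).
  assert (CS : (x * u1 + y * u2) ^ 2 <= nrm (x, y) ^ 2 * (u1 ^2 + u2 ^ 2)).
  { rewrite N. pose proof (pow2_ge_0 (x * u2 - y * u1)). nra. }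
  assert (AB : 2 * al * nrm (x,y) < x * u1 + y * u2) by (unfold u1, u2; lra).
  assert (0 <= 2 * al * nrm (x,y)) by nra.
  assert ((2 * al * nrm (x,y)) ^ 2 < (x * u1 + y * u2) ^ 2).
  { nra. }
  nra.
Qed.

Definition scal (r : R) (v : R2) : R2 := cm (r, 0) v.

Lemma nrm_scal r v : 0 <= r -> nrm (scal r v) = r * nrm v.
Proof. intros. unfold scal. rewrite nrm_cm. f_equal. apply nrm_eq; simpl; auto. ring. Qed.

Lemma cc_scal j r z : 0 <= r -> cc j (scal r z) = r * cc j z.
Proof.
  intros. unfold cc. rewrite <- pos_scale by auto. f_equal.
  rewrite nrm_scal by auto. pose proof al_facts. destruct z; simpl. field. lra.
Qed.

Lemma W2 i j lam : (i < M)%nat -> (j < M)%nat -> 0 <= lam ->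
  cc i (scal lam (expi (beta j))) = if Nat.eqb i j then lam else 0.
Proof.
  intros Hi Hj Hl. rewrite cc_scal by auto. pose proof al_facts.
  destruct (Nat.eqb_spec i j) as [<-|Hne].
  - unfold cc. rewrite nrm_expi. simpl.
    pose proof (sin2_cos2 (beta i)). unfold Rsqr in H0.
    replace (cos (beta i) * cos (beta i) + sin (beta i) * sin (beta i) - al * 1) with (1 - al) by lra.
    unfold Rdiv. rewrite Rinv_r by lra. rewrite pos_id by lra. ring.
  - unfold cc. rewrite nrm_expi. simpl. rewrite pos_0. ring.
    pose proof (sep j i Hj Hi (fun e => Hne (eq_sym e))). rewrite cos_minus in H0.
    unfold Rdiv. assert (0 < / (1 - al)) by (apply Rinv_0_lt_compat; lra). nra.
Qed.

Lemma cc_zero j : cc j (0,0) = 0.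
Proof.
  unfold cc. rewrite (nrm_eq (0,0) 0) by (simpl; lra). simpl. apply pos_0.
  unfold Rdiv. rewrite Rmult_0_r, Rmult_0_l, Rplus_0_l, Rminus_0_r, Rmult_0_l. lra.
Qed.

Lemma dichotomy z : (forall i, (i < M)%nat -> cc i z = 0) \/
  (exists j, (j < M)%nat /\ 0 < cc j z /\ forall i, (i < M)%nat -> i <> j -> cc i z = 0).
Proof.
  destruct (classic (exists j, (j < M)%nat /\ 0 < cc j z)) as [[j [Hj Hc]]|Hn].
  - right. exists j. repeat split; auto. intros i Hi Hij.
    destruct (cc_ge0 i z) as [Hp|]; auto. exfalso. eapply W1; [exact Hi|exact Hj|exact Hij|..]; eauto.
  - left. intros i Hi. destruct (cc_ge0 i z) as [Hp|]; auto. exfalso; eauto.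
Qed.

End Map.

Open Scope R_scope.

Fixpoint tau (L : list nat) (i : nat) : nat :=
  match L with
  | nil => i
  | l :: L' => if Nat.ltb i l then Nat.modulo (S i) l else (l + tau L' (i - l))%nat
  end.

Lemma tau_lt L i : (i < M L)%nat -> (tau L i < M L)%nat.
Proof.
  unfold M. revert i; induction L as [|l L IH]; intros i Hi; simpl in *. lia.
  destruct (Nat.ltb_spec i l).
  - pose proof (Nat.mod_upper_bound (S i) l ltac:(lia)). lia.
  - specialize (IH (i - l)%nat ltac:(lia)). lia.
Qed.

Lemma iter_tau_lt L n i : (i < M L)%nat -> (Nat.iter n (tau L) i < M L)%nat.
Proof. intros; induction n; simpl; auto. apply tau_lt; auto. Qed.

Definition vsum (l : list nat) (v : nat -> R2) : R2 := fold_right (fun i acc => cadd (v i) acc) c0 l.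

Lemma vsum_ext l v u : (forall i, In i l -> v i = u i) -> vsum l v = vsum l u.
Proof.
  induction l; simpl; intros; auto. rewrite H by auto. rewrite IHl; auto.
Qed.

Lemma vsum_zero l v : (forall i, In i l -> v i = c0) -> vsum l v = c0.
Proof.
  induction l; simpl; intros; auto. rewrite H by auto. rewrite IHl; auto. ring.
Qed.

Lemma vsum_single l v j : NoDup l -> In j l -> (forall i, In i l -> i <> j -> v i = c0) ->
  vsum l v = v j.
Proof.
  induction l as [|a l IH]; simpl; intros Nd Hj H. contradiction.
  inversion Nd; subst. destruct Hj as [->|Hj].
  - rewrite vsum_zero. ring. intros i Hi. apply H; auto. intro; subst; contradiction.
  - rewrite H; auto. rewrite IH; auto. ring. intro; subst; contradiction.
Qed.

Lemma vsum_cm z l v : cm z (vsum l v) = vsum l (fun i => cm z (v i)).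
Proof. induction l; simpl. unfold c0, cm; simpl; apply peq; ring. rewrite <- IHl. ring. Qed.

Definition fmap (L : list nat) (z : R2) : R2 :=
  vsum (seq 0 (M L)) (fun i => scal (2 * cc L i z) (expi (beta L (tau L i)))).

Lemma in_seq0 i m : In i (seq 0 m) <-> (i < m)%nat.
Proof. rewrite in_seq. lia. Qed.

Lemma scal0 v : scal 0 v = c0.
Proof. unfold scal, c0, cm; simpl; apply peq; ring. Qed.

Lemma fmap_zero L : fmap L (0,0) = (0,0).
Proof. unfold fmap. apply vsum_zero. intros. rewrite cc_zero, Rmult_0_r. apply scal0. Qed.

Lemma fmap_ray L j lam : (j < M L)%nat -> 0 <= lam ->
  fmap L (scal lam (expi (beta L j))) = scal (2 * lam) (expi (beta L (tau L j))).
Proof.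
  intros Hj Hl. unfold fmap. rewrite (vsum_single _ _ j).
  - rewrite W2 by auto. rewrite Nat.eqb_refl. auto.
  - apply seq_NoDup.
  - apply in_seq0; auto.
  - intros i Hi Hne. apply in_seq0 in Hi. rewrite W2 by auto.
    destruct (Nat.eqb_spec i j); [contradiction|]. rewrite Rmult_0_r. apply scal0.
Qed.

Lemma iter_formula L n z : (1 <= n)%nat ->
  Nat.iter n (fmap L) z =
  vsum (seq 0 (M L)) (fun i => scal (2 ^ n * cc L i z) (expi (beta L (Nat.iter n (tau L) i)))).
Proof.
  intros Hn. destruct n as [|n]; [lia|]. clear Hn. induction n.
  - simpl. unfold fmap. apply vsum_ext. intros. f_equal. f_equal. ring.
  - change (Nat.iter (S (S n)) (fmap L) z) with (fmap L (Nat.iter (S n) (fmap L) z)).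
    rewrite IHn. destruct (dichotomy L z) as [Z|[j [Hj [Hc Ho]]]].
    + rewrite vsum_zero. rewrite fmap_zero. symmetry. apply vsum_zero.
      all: intros i Hi; apply in_seq0 in Hi; rewrite Z by auto; rewrite Rmult_0_r; apply scal0.
    + assert (Ho' : forall m, forall i, In i (seq 0 (M L)) -> i <> j ->
          scal (2 ^ m * cc L i z) (expi (beta L (Nat.iter m (tau L) i))) = c0).
      { intros m i Hi Hne. apply in_seq0 in Hi. rewrite Ho by auto. rewrite Rmult_0_r. apply scal0. }
      rewrite (vsum_single _ _ j), (vsum_single _ _ j); auto; try apply seq_NoDup; try (apply in_seq0; auto).
      rewrite fmap_ray. f_equal. simpl; ring. apply iter_tau_lt; auto.
      apply Rmult_le_pos. apply pow_le; lra. apply cc_ge0.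
Qed.

Open Scope Z_scope.

Definition zsum (l : list nat) (g : nat -> Z) : Z := fold_right (fun i acc => g i + acc) 0 l.

Lemma zsum_app a b g : zsum (a ++ b) g = zsum a g + zsum b g.
Proof. induction a; simpl; auto. rewrite IHa. ring. Qed.

Lemma zsum_ext l g h : (forall i, In i l -> g i = h i) -> zsum l g = zsum l h.
Proof. induction l; simpl; intros; auto. rewrite H, IHl; auto. Qed.

Lemma zsum_shift s k g : zsum (seq s k) g = zsum (seq 0 k) (fun i => g (s + i)%nat).
Proof.
  revert s g; induction k; intros s g; simpl; auto. rewrite Nat.add_0_r. f_equal.
  rewrite (IHk (S s)). change (fold_right (fun (i : nat) (acc : Z) => g (s + i)%nat + acc) 0 (seq 1 k)) with (zsum (seq 1 k) (fun i => g (s + i)%nat)).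
  rewrite (IHk 1%nat (fun i => g (s + i)%nat)). apply zsum_ext. intros. f_equal. lia.
Qed.

Lemma zsum_const k c : zsum (seq 0 k) (fun _ => c) = Z.of_nat k * c.
Proof.
  generalize 0%nat. induction k; intros s. reflexivity.
  rewrite Nat2Z.inj_succ. unfold zsum. cbn [seq fold_right]. fold (zsum (seq (S s) k) (fun _ => c)).
  rewrite IHk. ring.
Qed.

Lemma iter_tau_block l L n i : (i < l)%nat -> Nat.iter n (tau (l :: L)) i = ((i + n) mod l)%nat.
Proof.
  intros Hi. induction n.
  - simpl. rewrite Nat.add_0_r, Nat.mod_small; auto.
  - rewrite Nat.iter_succ, IHn. cbn [tau]. pose proof (Nat.mod_upper_bound (i + n) l ltac:(lia)).
    destruct (Nat.ltb_spec ((i + n) mod l) l); [|lia].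
    replace (S ((i + n) mod l)) with (1 + (i + n) mod l)%nat by lia.
    rewrite Nat.Div0.add_mod_idemp_r. f_equal. lia.
Qed.

Lemma iter_tau_shift l L n i : Nat.iter n (tau (l :: L)) (l + i)%nat = (l + Nat.iter n (tau L) i)%nat.
Proof.
  induction n; auto. rewrite !Nat.iter_succ, IHn. cbn [tau].
  destruct (Nat.ltb_spec (l + Nat.iter n (tau L) i) l); [lia|]. f_equal. f_equal. lia.
Qed.

Lemma mod_fix l n i : (i < l)%nat -> ((i + n) mod l = i <-> n mod l = 0)%nat.
Proof.
  intros Hi. rewrite <- Nat.Div0.add_mod_idemp_r.
  pose proof (Nat.mod_upper_bound n l ltac:(lia)). set (q := (n mod l)%nat) in *.
  split; intros E.
  - destruct (lt_dec (i + q) l).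
    + rewrite Nat.mod_small in E; lia.
    + replace (i + q)%nat with ((i + q - l) + 1 * l)%nat in E by lia.
      rewrite Nat.Div0.mod_add, Nat.mod_small in E; lia.
  - rewrite E, Nat.add_0_r, Nat.mod_small; auto.
Qed.

Definition fixw (L : list nat) (n : nat) : Z :=
  zsum (seq 0 (M L)) (fun i => if Nat.eqb (Nat.iter n (tau L) i) i then (-1) else 0).

Definition blk (n l : nat) : Z := if Nat.eqb l 0 then 0 else if Nat.eqb (n mod l) 0 then - Z.of_nat l else 0.

Lemma fixw_eq L n : fixw L n = fold_right (fun l acc => blk n l + acc) 0 L.
Proof.
  induction L as [|l L IH]; [reflexivity|].
  unfold fixw in *. simpl fold_right. unfold M. simpl list_sum.
  rewrite seq_app, zsum_app. f_equal.
  - unfold blk. destruct (Nat.eqb_spec l 0) as [->|Hl]. reflexivity.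
    rewrite (zsum_ext _ _ (fun _ => if Nat.eqb (n mod l) 0 then -1 else 0)).
    + rewrite zsum_const. destruct (Nat.eqb (n mod l) 0); lia.
    + intros i Hi. apply in_seq in Hi. rewrite iter_tau_block by lia.
      destruct (Nat.eqb_spec ((i + n) mod l) i) as [E|E];
      destruct (Nat.eqb_spec (n mod l) 0) as [F|F]; auto.
      * apply mod_fix in E; [contradiction|lia].
      * apply (mod_fix l n i) in F; [contradiction|lia].
  - rewrite zsum_shift. cbn [Nat.add]. unfold M in IH. rewrite <- IH. apply zsum_ext.
    intros i Hi. rewrite iter_tau_shift.
    destruct (Nat.eqb_spec (l + Nat.iter n (tau L) i) (l + i));
    destruct (Nat.eqb_spec (Nat.iter n (tau L) i) i); auto; lia.
Qed.

Lemma divsum_eq F a n : (1 <= n)%nat ->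
  fold_right (fun l acc => blk n l + acc) 0 (flat_map (fun k => repeat k (a k)) F) = - divsum F a n.
Proof.
  intros Hn. induction F as [|k F IH]; simpl; auto.
  assert (R : forall m l0, fold_right (fun l acc => blk n l + acc) 0 (repeat k m ++ l0)
      = Z.of_nat m * blk n k + fold_right (fun l acc => blk n l + acc) 0 l0).
  { induction m; intros. simpl. lia. cbn [repeat app fold_right]. rewrite IHm, Nat2Z.inj_succ. ring. }
  rewrite R, IH. unfold blk. destruct (Nat.eqb k 0); [lia|].
  destruct (Nat.eqb (n mod k) 0); lia.
Qed.

Open Scope R_scope.

Definition cprod (l : list nat) (F : nat -> R -> R2) (t : R) : R2 :=
  fold_right (fun i acc => cm (F i t) acc) c1 l.

Lemma winds_cprod l F m : (forall i, In i l -> winds (F i) (m i)) ->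
  winds (cprod l F) (zsum l m).
Proof.
  induction l as [|a l IH]; intros H.
  - eapply winds_ext; [|apply (winds_const 1); lra]. intros; reflexivity.
  - apply (winds_mul (F a) (cprod l F)). apply H; simpl; auto. apply IH. intros; apply H; simpl; auto.
Qed.

Lemma cprod_id l (A : nat -> R) (w : nat -> R2) : NoDup l ->
  (forall i j, In i l -> In j l -> i <> j -> A i = 0 \/ A j = 0) ->
  fold_right (fun i acc => cm (csub c1 (scal (A i) (w i))) acc) c1 l =
  csub c1 (vsum l (fun i => scal (A i) (w i))).
Proof.
  induction l as [|a l IH]; intros Nd H.
  - simpl. unfold csub, c1, cneg, cadd, c0; simpl. apply peq; ring.
  - inversion Nd; subst. simpl. rewrite IH; auto.
    2:{ intros; apply H; simpl; auto. }
    destruct (Req_dec (A a) 0) as [E|E].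
    + rewrite E, scal0. ring.
    + rewrite vsum_zero. ring. intros j Hj.
      assert (Hne : a <> j) by (intro; subst; contradiction).
      destruct (H a j (or_introl eq_refl) (or_intror Hj) Hne) as [X|X]; [contradiction| rewrite X; apply scal0].
Qed.

Lemma expi_mul a b : cm (expi a) (expi b) = expi (a + b).
Proof. unfold cm, expi; simpl. rewrite cos_plus, sin_plus. apply peq; ring. Qed.

Lemma expi_per x : expi (x - 2 * PI) = expi x.
Proof. unfold expi. rewrite cos_minus, sin_minus, cos_2PI, sin_2PI. apply peq; ring. Qed.

Lemma cc_expi L i th : cc L i (expi th) = pos ((cos (th - beta L i) - al L) / (1 - al L)).
Proof. unfold cc. rewrite nrm_expi, cos_minus. simpl. f_equal. f_equal. ring. Qed.

Lemma Cont_A L i : Cont (fun t => cc L i (expi (2 * PI * t))).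
Proof.
  replace (fun t => cc L i (expi (2 * PI * t))) with
    (fun t => pos ((cos (2 * PI * t - beta L i) - al L) * / (1 - al L))).
  2:{ apply functional_extensionality. intros. rewrite cc_expi. reflexivity. }
  apply Cpos. cont.
Qed.

Lemma cos1 x : sin x = 0 -> 0 <= cos x -> cos x = 1.
Proof.
  intros. pose proof (sin2_cos2 x). unfold Rsqr in H1. rewrite H in H1.
  assert ((cos x - 1) * (cos x + 1) = 0) by nra.
  apply Rmult_integral in H2. lra.
Qed.

Section Wind.
Variable L : list nat.
Variable n : nat.
Hypothesis Hn : (1 <= n)%nat.

Definition gam i := beta L (Nat.iter n (tau L) i).
Definition AA i t := 2 ^ n * cc L i (expi (2 * PI * t)).
Definition fac (i : nat) (t : R) : R2 :=
  csub c1 (scal (AA i t) (expi (gam i - 2 * PI * t))).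

Lemma two_n : 2 <= 2 ^ n.
Proof. destruct n; [lia|]. simpl. pose proof (pow_R1_Rle 2 n0 ltac:(lra)). lra. Qed.

Lemma AA_ge0 i t : 0 <= AA i t.
Proof. unfold AA. apply Rmult_le_pos. pose proof two_n. lra. apply cc_ge0. Qed.

Lemma fac_per i : fac i 0 = fac i 1.
Proof.
  unfold fac, AA. rewrite Rmult_1_r, Rmult_0_r, Rminus_0_r, expi_per.
  replace (expi (2 * PI)) with (expi 0). auto.
  rewrite <- (expi_per (2 * PI)). f_equal. ring.
Qed.

Lemma winds_fac_nf i : (i < M L)%nat -> Nat.iter n (tau L) i <> i -> winds (fac i) 0.
Proof.
  intros Hi Hne. apply winds_slit.
  - replace (fun t => fst (fac i t)) with (fun t => 1 - AA i t * cos (gam i - 2 * PI * t)).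
    2:{ apply functional_extensionality; intros; unfold fac, csub, scal, cm, cneg, cadd, c1; simpl; ring. }
    unfold AA. apply Cminus. apply Cc. apply Cmult. apply Cmult. apply Cc. apply Cont_A. cont.
  - replace (fun t => snd (fac i t)) with (fun t => - (AA i t * sin (gam i - 2 * PI * t))).
    2:{ apply functional_extensionality; intros; unfold fac, csub, scal, cm, cneg, cadd, c1; simpl; ring. }
    unfold AA. apply Copp. apply Cmult. apply Cmult. apply Cc. apply Cont_A. cont.
  - intros t [H1 H2]. unfold fac, csub, scal, cm, cneg, cadd, c1 in H1, H2; simpl in H1, H2.
    set (phi := gam i - 2 * PI * t) in *. set (th := 2 * PI * t) in *.
    pose proof (AA_ge0 i t) as A0.
    assert (Ap : 0 < AA i t) by (destruct A0; auto; rewrite <- H in H2; lra).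
    assert (Sp : sin phi = 0).
    { assert (AA i t * sin phi = 0) by lra. apply Rmult_integral in H. destruct H; lra. }
    assert (Cp : 0 <= cos phi).
    { destruct (Rle_dec 0 (cos phi)); auto. nra. }
    pose proof (cos1 _ Sp Cp) as C1.
    assert (Cpos : 0 < cc L i (expi th)).
    { unfold AA in Ap. fold th in Ap. pose proof two_n. destruct (cc_ge0 L i (expi th)); auto. rewrite <- H0 in Ap. lra. }
    apply cc_pos in Cpos. rewrite nrm_expi in Cpos. simpl in Cpos.
    pose proof (sep L (Nat.iter n (tau L) i) i (iter_tau_lt _ _ _ Hi) Hi Hne) as S.
    fold (gam i) in S.
    replace (gam i - beta L i) with (phi + (th - beta L i)) in S by (unfold phi; ring).
    rewrite cos_plus, Sp, C1, cos_minus in S.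
    pose proof (al_facts L). lra.
  - apply fac_per.
Qed.

Lemma winds_fac_f i : (i < M L)%nat -> Nat.iter n (tau L) i = i -> winds (fac i) (-1).
Proof.
  intros Hi He.
  assert (G : gam i = beta L i) by (unfold gam; rewrite He; auto).
  apply (winds_ext (fun t => cm (expi (beta L i + 2 * PI * IZR (-1) * t))
                            (csub (expi (2 * PI * t - beta L i)) (AA i t, 0)))).
  { intros t _. symmetry. unfold fac. rewrite G.
    replace (beta L i + 2 * PI * IZR (-1) * t) with (beta L i - 2 * PI * t) by (simpl; ring).
    transitivity (csub (cm (expi (beta L i - 2 * PI * t)) (expi (2 * PI * t - beta L i)))
                       (scal (AA i t) (expi (beta L i - 2 * PI * t)))).
    - rewrite expi_mul. replace (beta L i - 2 * PI * t + (2 * PI * t - beta L i)) with 0 by ring.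
      unfold expi. rewrite cos_0, sin_0. reflexivity.
    - unfold scal. ring. }
  replace (-1)%Z with (-1 + 0)%Z by lia.
  apply winds_mul. apply winds_expi.
  apply winds_slitpos.
  - replace (fun t => fst (csub (expi (2 * PI * t - beta L i)) (AA i t, 0)))
      with (fun t => cos (2 * PI * t - beta L i) - AA i t).
    2:{ apply functional_extensionality; intros; unfold csub, cneg, cadd; simpl; ring. }
    apply Cminus. cont. unfold AA. apply Cmult. apply Cc. apply Cont_A.
  - replace (fun t => snd (csub (expi (2 * PI * t - beta L i)) (AA i t, 0)))
      with (fun t => sin (2 * PI * t - beta L i)).
    2:{ apply functional_extensionality; intros; unfold csub, cneg, cadd; simpl; ring. }
    cont.
  - intros t [H1 H2]. unfold csub, cneg, cadd in H1, H2; simpl in H1, H2.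
    rewrite Ropp_0, Rplus_0_r in H1.
    pose proof (AA_ge0 i t).
    pose proof (cos1 _ H1 ltac:(lra)) as C1.
    unfold AA in H2. rewrite cc_expi, C1 in H2. pose proof (al_facts L).
    replace ((1 - al L) / (1 - al L)) with 1 in H2 by (field; lra).
    rewrite pos_id in H2 by lra. pose proof two_n. lra.
  - rewrite Rmult_1_r, Rmult_0_r.
    replace (2 * PI - beta L i) with ((0 - beta L i) + 2 * PI) by ring.
    unfold AA. rewrite Rmult_1_r, Rmult_0_r.
    replace (expi (2 * PI)) with (expi 0) by (rewrite <- (expi_per (2 * PI)); f_equal; ring).
    rewrite <- (expi_per (0 - beta L i + 2 * PI)).
    replace (0 - beta L i + 2 * PI - 2 * PI) with (0 - beta L i) by ring. auto.
Qed.


Lemma circ_eq r t : circ (0,0) r t = scal r (expi (2 * PI * t)).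
Proof. unfold circ, scal, cm, expi; simpl. apply peq; ring. Qed.

Lemma pair_sub (x v : R2) : (fst x - fst v, snd x - snd v) = csub x v.
Proof. destruct x, v; unfold csub, cadd, cneg; simpl; apply peq; ring. Qed.

Theorem winds_main r : 0 < r ->
  winds (fun t => let x := circ (0,0) r t in
                  (fst x - fst (Nat.iter n (fmap L) x), snd x - snd (Nat.iter n (fmap L) x)))
        (1 + fixw L n)%Z.
Proof.
  intros Hr.
  assert (WP : winds (cprod (seq 0 (M L)) fac) (fixw L n)).
  { apply winds_cprod. intros i Hi. apply in_seq0 in Hi.
    destruct (Nat.eqb_spec (Nat.iter n (tau L) i) i) as [E|E].
    - apply winds_fac_f; auto.
    - apply winds_fac_nf; auto. }
  pose proof (winds_mul _ _ _ _ (winds_const r Hr) (winds_mul _ _ _ _ (winds_expi 0 1) WP)) as W.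
  eapply winds_eqm; [|eapply winds_ext; [|exact W]]. lia.
  intros t _. cbv zeta. rewrite pair_sub, circ_eq, iter_formula by auto.
  replace (0 + 2 * PI * IZR 1 * t) with (2 * PI * t) by (simpl; ring).
  set (th := 2 * PI * t).
  unfold cprod, fac. fold th.
  rewrite (cprod_id _ (fun i => AA i t) (fun i => expi (gam i - th))).
  2: apply seq_NoDup.
  2:{ intros i j Hi Hj Hij. apply in_seq0 in Hi, Hj. unfold AA. fold th.
      destruct (cc_ge0 L i (expi th)) as [Ci|Ci]; [|left; rewrite <- Ci; ring].
      destruct (cc_ge0 L j (expi th)) as [Cj|Cj]; [|right; rewrite <- Cj; ring].
      exfalso. exact (W1 L i j _ Hi Hj Hij Ci Cj). }
  transitivity (csub (scal r (expi th))
     (cm (r, 0) (cm (expi th) (vsum (seq 0 (M L)) (fun i => scal (AA i t) (expi (gam i - th))))))).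
  { unfold scal. ring. }
  f_equal. rewrite !vsum_cm. apply vsum_ext. intros i Hi.
  rewrite cc_scal by lra.
  transitivity (scal (r * AA i t) (cm (expi th) (expi (gam i - th)))).
  { unfold scal. unfold cm at 1 2 3 4 5; simpl. destruct (expi th), (expi (gam i - th)); simpl.
    unfold cm; simpl. apply peq; ring. }
  rewrite expi_mul. replace (th + (gam i - th)) with (gam i) by ring.
  unfold AA. fold th. f_equal. ring.
Qed.

End Wind.

Open Scope R_scope.

Lemma sq_le a b : 0 <= b -> a ^ 2 <= b ^ 2 -> a <= b.
Proof. intros. destruct (Rle_dec a b); auto. nra. Qed.

Lemma abs_le_sq a b : 0 <= b -> a ^ 2 <= b ^ 2 -> Rabs a <= b.
Proof. intros. apply sq_le; auto. rewrite pow2_abs. auto. Qed.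

Lemma nrm_tri z w : nrm (cadd z w) <= nrm z + nrm w.
Proof.
  apply sq_le. pose proof (nrm_ge0 z); pose proof (nrm_ge0 w); lra.
  rewrite nrm_sq. pose proof (nrm_sq z); pose proof (nrm_sq w).
  pose proof (nrm_ge0 z); pose proof (nrm_ge0 w).
  destruct z as [z1 z2], w as [w1 w2]; unfold cadd; cbn [fst snd] in *.
  assert (CS : (z1 * w1 + z2 * w2) ^ 2 <= (nrm (z1, z2) * nrm (w1, w2)) ^ 2).
  { rewrite Rpow_mult_distr, H, H0. pose proof (pow2_ge_0 (z1 * w2 - z2 * w1)). nra. }
  assert (z1 * w1 + z2 * w2 <= nrm (z1, z2) * nrm (w1, w2)) by (apply sq_le; auto; nra).
  nra.
Qed.

Lemma dist_nrm x y : dist2 x y = nrm (csub x y).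
Proof. unfold dist2, nrm, csub, cadd, cneg; simpl. f_equal; ring. Qed.

Lemma dist_sym x y : dist2 x y = dist2 y x.
Proof. unfold dist2. f_equal; ring. Qed.

Lemma nrm_rev z w : Rabs (nrm z - nrm w) <= nrm (csub z w).
Proof.
  pose proof (nrm_tri (csub z w) w). pose proof (nrm_tri (csub w z) z).
  replace (cadd (csub z w) w) with z in H by ring.
  replace (cadd (csub w z) z) with w in H0 by ring.
  assert (nrm (csub w z) = nrm (csub z w)) by (rewrite <- !dist_nrm; apply dist_sym).
  apply Rabs_le. lra.
Qed.

Lemma dot_le z a b : a ^ 2 + b ^ 2 = 1 -> Rabs (fst z * a + snd z * b) <= nrm z.
Proof.
  intros. apply abs_le_sq. apply nrm_ge0. rewrite nrm_sq.
  pose proof (pow2_ge_0 (fst z * b - snd z * a)). nra.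
Qed.

Lemma pos_lip x y : Rabs (pos x - pos y) <= Rabs (x - y).
Proof.
  unfold pos. pose proof (Rabs_triang_inv x y). pose proof (Rabs_triang_inv y x).
  rewrite (Rabs_minus_sym y x) in H0. apply Rabs_le.
  pose proof (Rle_abs (x - y)). pose proof (Rle_abs (-(x - y))). rewrite Rabs_Ropp in H2. lra.
Qed.

Definition Lc L := (1 + al L) / (1 - al L).

Lemma cc_lip L j z w : Rabs (cc L j z - cc L j w) <= Lc L * nrm (csub z w).
Proof.
  unfold cc. eapply Rle_trans; [apply pos_lip|]. pose proof (al_facts L).
  replace ((fst z * cos (beta L j) + snd z * sin (beta L j) - al L * nrm z) / (1 - al L) -
     (fst w * cos (beta L j) + snd w * sin (beta L j) - al L * nrm w) / (1 - al L))
    with (((fst (csub z w) * cos (beta L j) + snd (csub z w) * sin (beta L j)) - al L * (nrm z - nrm w)) / (1 - al L))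
    by (unfold csub, cadd, cneg; simpl; field; lra).
  unfold Rdiv, Lc. rewrite Rabs_mult, (Rabs_pos_eq (/ (1 - al L))) by (left; apply Rinv_0_lt_compat; lra).
  replace ((1 + al L) / (1 - al L) * nrm (csub z w)) with (((1 + al L) * nrm (csub z w)) * / (1 - al L)) by (unfold Rdiv; ring).
  apply Rmult_le_compat_r. left; apply Rinv_0_lt_compat; lra.
  eapply Rle_trans; [apply Rabs_triang|]. rewrite Rabs_Ropp, Rabs_mult, (Rabs_pos_eq (al L)) by lra.
  pose proof (dot_le (csub z w) (cos (beta L j)) (sin (beta L j))) as D.
  pose proof (sin2_cos2 (beta L j)) as SC. unfold Rsqr in SC.
  pose proof (nrm_rev z w). pose proof (nrm_ge0 (csub z w)).
  assert (Rabs (fst (csub z w) * cos (beta L j) + snd (csub z w) * sin (beta L j)) <= nrm (csub z w))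
    by (apply D; lra). destruct H. nra.
Qed.

Lemma vsum_lip_fst l v u B : (forall i, In i l -> Rabs (fst (v i) - fst (u i)) <= B) ->
  Rabs (fst (vsum l v) - fst (vsum l u)) <= INR (length l) * B.
Proof.
  induction l; intros H. simpl. rewrite Rminus_0_r, Rabs_R0. lra.
  unfold vsum; cbn [fold_right length]; fold (vsum l v) (vsum l u). unfold cadd; cbn [fst snd].
  replace (fst (v a) + fst (vsum l v) - (fst (u a) + fst (vsum l u))) with
    ((fst (v a) - fst (u a)) + (fst (vsum l v) - fst (vsum l u))) by ring.
  eapply Rle_trans; [apply Rabs_triang|]. rewrite S_INR.
  pose proof (H a (or_introl eq_refl)). pose proof (IHl (fun i Hi => H i (or_intror Hi))). lra.
Qed.

Lemma vsum_lip_snd l v u B : (forall i, In i l -> Rabs (snd (v i) - snd (u i)) <= B) ->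
  Rabs (snd (vsum l v) - snd (vsum l u)) <= INR (length l) * B.
Proof.
  induction l; intros H. simpl. rewrite Rminus_0_r, Rabs_R0. lra.
  unfold vsum; cbn [fold_right length]; fold (vsum l v) (vsum l u). unfold cadd; cbn [fst snd].
  replace (snd (v a) + snd (vsum l v) - (snd (u a) + snd (vsum l u))) with
    ((snd (v a) - snd (u a)) + (snd (vsum l v) - snd (vsum l u))) by ring.
  eapply Rle_trans; [apply Rabs_triang|]. rewrite S_INR.
  pose proof (H a (or_introl eq_refl)). pose proof (IHl (fun i Hi => H i (or_intror Hi))). lra.
Qed.

Lemma sqrt_sum_le a b : sqrt (a ^ 2 + b ^ 2) <= Rabs a + Rabs b.
Proof.
  apply sq_le. pose proof (Rabs_pos a); pose proof (Rabs_pos b); lra.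
  rewrite pow2_sqrt by nra. rewrite <- (pow2_abs a), <- (pow2_abs b).
  pose proof (Rabs_pos a); pose proof (Rabs_pos b). nra.
Qed.

Lemma fmap_lip L z w : dist2 (fmap L z) (fmap L w) <= 4 * INR (M L) * Lc L * dist2 z w.
Proof.
  set (B := 2 * (Lc L * nrm (csub z w))).
  assert (Hf : Rabs (fst (fmap L z) - fst (fmap L w)) <= INR (M L) * B).
  { unfold fmap. rewrite <- (length_seq (M L) 0) at 3. apply vsum_lip_fst. intros i _.
    unfold scal, cm; simpl.
    replace (2 * cc L i z * cos (beta L (tau L i)) - 0 * sin (beta L (tau L i)) -
             (2 * cc L i w * cos (beta L (tau L i)) - 0 * sin (beta L (tau L i))))
      with (2 * (cc L i z - cc L i w) * cos (beta L (tau L i))) by ring.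
    rewrite !Rabs_mult. pose proof (COS_bound (beta L (tau L i))).
    assert (Rabs (cos (beta L (tau L i))) <= 1) by (apply Rabs_le; lra).
    pose proof (cc_lip L i z w). pose proof (Rabs_pos (cc L i z - cc L i w)). unfold B.
    rewrite Rabs_pos_eq by lra. nra. }
  assert (Hs : Rabs (snd (fmap L z) - snd (fmap L w)) <= INR (M L) * B).
  { unfold fmap. rewrite <- (length_seq (M L) 0) at 3. apply vsum_lip_snd. intros i _.
    unfold scal, cm; simpl.
    replace (2 * cc L i z * sin (beta L (tau L i)) + 0 * cos (beta L (tau L i)) -
             (2 * cc L i w * sin (beta L (tau L i)) + 0 * cos (beta L (tau L i))))
      with (2 * (cc L i z - cc L i w) * sin (beta L (tau L i))) by ring.
    rewrite !Rabs_mult. pose proof (SIN_bound (beta L (tau L i))).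
    assert (Rabs (sin (beta L (tau L i))) <= 1) by (apply Rabs_le; lra).
    pose proof (cc_lip L i z w). pose proof (Rabs_pos (cc L i z - cc L i w)). unfold B.
    rewrite Rabs_pos_eq by lra. nra. }
  unfold dist2 at 1. eapply Rle_trans; [apply sqrt_sum_le|].
  rewrite dist_nrm. unfold B in *. lra.
Qed.

Lemma Lc_pos L : 0 < Lc L.
Proof. pose proof (al_facts L). unfold Lc. apply Rdiv_lt_0_compat; lra. Qed.

Lemma fmap_cont L : continuous2 (fmap L).
Proof.
  intros x eps He. set (K := 4 * INR (M L) * Lc L).
  assert (K0 : 0 <= K) by (unfold K; pose proof (pos_INR (M L)); pose proof (Lc_pos L); nra).
  exists (eps / (K + 1)). split. apply Rdiv_lt_0_compat; lra.
  intros y Hy. eapply Rle_lt_trans; [apply fmap_lip|]. fold K.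
  pose proof (dist_nrm x y). pose proof (nrm_ge0 (csub x y)).
  apply Rle_lt_trans with (K * (eps / (K + 1))). apply Rmult_le_compat_l; lra.
  replace (K * (eps / (K + 1))) with (eps - eps / (K + 1)) by (field; lra).
  assert (0 < eps / (K + 1)) by (apply Rdiv_lt_0_compat; lra). lra.
Qed.

Open Scope R_scope.

Lemma pow2_ge m : 1 + INR m <= 2 ^ m.
Proof. induction m. simpl; lra. rewrite S_INR. simpl. pose proof (pos_INR m). lra. Qed.

Lemma iter_zero L n : Nat.iter n (fmap L) (0,0) = (0,0).
Proof. induction n; simpl; auto. rewrite IHn. apply fmap_zero. Qed.

Lemma iter_active L n z j : (1 <= n)%nat -> (j < M L)%nat ->
  (forall i, (i < M L)%nat -> i <> j -> cc L i z = 0) ->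
  Nat.iter n (fmap L) z = scal (2 ^ n * cc L j z) (expi (beta L (Nat.iter n (tau L) j))).
Proof.
  intros Hn Hj Ho. rewrite iter_formula by auto. rewrite (vsum_single _ _ j); auto. apply seq_NoDup.
  apply in_seq0; auto. intros i Hi Hne. apply in_seq0 in Hi. rewrite Ho by auto.
  rewrite Rmult_0_r. apply scal0.
Qed.

Lemma iter_inactive L n z : (1 <= n)%nat -> (forall i, (i < M L)%nat -> cc L i z = 0) ->
  Nat.iter n (fmap L) z = (0,0).
Proof.
  intros Hn Ho. rewrite iter_formula by auto. apply vsum_zero. intros i Hi.
  apply in_seq0 in Hi. rewrite Ho by auto. rewrite Rmult_0_r. apply scal0.
Qed.

Lemma nrm_ray lam b : 0 <= lam -> nrm (scal lam (expi b)) = lam.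
Proof. intros. rewrite nrm_scal, nrm_expi by auto. ring. Qed.

Lemma isolated L : isolated_invariant_singleton (fmap L) (0,0).
Proof.
  exists (fun x => dist2 x (0,0) <= 1). split; [split|split].
  - exists 1. auto.
  - intros x Hx. rewrite dist0. destruct (Rle_dec (nrm x) 1) as [|Hn]; auto. exfalso.
    destruct (Hx (nrm x - 1) ltac:(lra)) as [y [Hy Hd]].
    rewrite dist0 in Hy. rewrite dist_nrm in Hd.
    pose proof (nrm_tri (csub x y) y). replace (cadd (csub x y) y) with x in H by ring. lra.
  - intros x. split.
    + intros [xs [H0 Hxs]].
      assert (Hit : forall m, xs (Z.of_nat m) = Nat.iter (S m) (fmap L) (xs (-1)%Z)).
      { induction m.
        - simpl. destruct (Hxs (-1)%Z) as [_ E]. rewrite E. auto.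
        - rewrite Nat2Z.inj_succ, <- Z.add_1_r. destruct (Hxs (Z.of_nat m)) as [_ E].
          rewrite <- E, IHm. reflexivity. }
      destruct (dichotomy L (xs (-1)%Z)) as [Z|[j [Hj [Hc Ho]]]].
      * rewrite <- H0. change 0%Z with (Z.of_nat 0). rewrite Hit. apply iter_inactive; auto.
      * exfalso. set (c := cc L j (xs (-1)%Z)) in *.
        destruct (archimed (1 / c)) as [A1 _].
        set (m := Z.to_nat (up (1 / c))).
        assert (Hm : 1 / c < INR m).
        { unfold m. assert (0 < 1 / c) by (apply Rdiv_lt_0_compat; lra).
          rewrite INR_IZR_INZ, Z2Nat.id. lra. apply le_IZR. lra. }
        destruct (Hxs (Z.of_nat m)) as [HN _]. rewrite Hit, dist0 in HN.
        rewrite (iter_active L (S m) _ j) in HN by (auto; lia).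
        rewrite nrm_ray in HN.
        2:{ apply Rmult_le_pos. apply pow_le; lra. apply cc_ge0. }
        pose proof (pow2_ge (S m)). rewrite S_INR in H.
        assert (INR m * c > 1).
        { apply Rmult_lt_compat_r with (r := c) in Hm; auto. unfold Rdiv in Hm.
          rewrite Rmult_1_l, Rinv_l in Hm by lra. lra. }
        fold c in HN. assert ((1 + (INR m + 1)) * c <= 2 ^ S m * c) by (apply Rmult_le_compat_r; lra). lra.
    + intros ->. exists (fun _ => (0,0)). split; auto. intros k. split.
      rewrite dist0, (nrm_eq (0,0) 0) by (simpl; lra). lra. apply fmap_zero.
  - exists 1. split. lra. intros y Hy. rewrite dist_sym. lra.
Qed.

Lemma fixed_isolated L n x : (1 <= n)%nat -> Nat.iter n (fmap L) x = x -> x = (0,0).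
Proof.
  intros Hn E. destruct (dichotomy L x) as [Z|[j [Hj [Hc Ho]]]].
  - rewrite <- E. apply iter_inactive; auto.
  - exfalso. rewrite (iter_active L n x j) in E by auto.
    pose proof (W2 L j (Nat.iter n (tau L) j) (2 ^ n * cc L j x) Hj (iter_tau_lt _ _ _ Hj)
      ltac:(apply Rmult_le_pos; [apply pow_le; lra|lra])) as W.
    rewrite E in W. pose proof (two_n n Hn).
    destruct (Nat.eqb j (Nat.iter n (tau L) j)); nra.
Qed.

Theorem mainTheorem8 (F : list nat) (a : nat -> nat)
  (HF : NoDup F) (Ha : forall k, In k F -> (0 < a k)%nat) :
  exists (f : R2 -> R2) (p : R2),
    continuous2 f /\ f p = p /\ isolated_invariant_singleton f p /\
    forall n : nat, (1 <= n)%nat ->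
      fp_index (Nat.iter n f) p (1 - divsum F a n)%Z.
Proof.
  set (L := flat_map (fun k => repeat k (a k)) F).
  exists (fmap L), (0,0). split; [|split; [|split]].
  - apply fmap_cont.
  - apply fmap_zero.
  - apply isolated.
  - intros n Hn. split. apply iter_zero.
    exists 1. split. lra. intros r [Hr _]. split.
    + intros x _ E. eapply fixed_isolated; eauto.
    + eapply winds_eqm; [|apply winds_main; auto].
      rewrite fixw_eq. unfold L. rewrite divsum_eq by auto. lia.
Qed.
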